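(* Consider transport, under an invertible area-preserving map $P$ of a two-dimensional surface $\Sigma$, between two regions $R_0$ and $R_1$ separated by a homoclinic or heteroclinic tangle, with lobes $L_{i,j}(n)$ as described in the context, and assume $L_{0,1}(0)\cap L_{1,0}(0)=\emptyset$. Let $i\in\{0,1\}$, $j=1-i$, and let integers $k_1<k_3$ be such that $L_{i,j}(k_1)\cap L_{i,j}(k_3)\neq\emptyset$. Then $$L_{i,j}(k_1)\cap L_{i,j}(k_3)=\bigcup_{k_2=k_1+1}^{k_3-1} L_{i,j}(k_1)\cap L_{j,i}(k_2)\cap L_{i,j}(k_3).$$
   Context: $\Sigma$ is a two-dimensional surface with an area measure $\mu$ and $P:\Sigma\to\Sigma$ an invertible $\mu$-preserving map. $R_0$ and $R_1$ are two regions of $\Sigma$ whose common boundary is formed by segments of stable and unstable manifolds of hyperbolic fixed points of $P$ joined at primary intersection points (a homoclinic or heteroclinic tangle). For $i\in\{0,1\}$, $j=1-i$, $L_{i,j}(n)$ ($n\in\mathbb{Z}$) denotes the lobe of points that leave $R_i$ for $R_j$ immediately after $n$ iterations of $P$: $L_{i,j}(1)\subset R_i$, $L_{i,j}(0)=P\,L_{i,j}(1)\subset R_j$, and $P^kL_{i,j}(n)=L_{i,j}(n-k)$ for all $k,n\in\mathbb{Z}$. Transport between the regions occurs only through these lobes (turnstile): a point $x$ with $P^{m-1}x\in R_i$ and $P^{m}x\in R_j$ lies in $L_{i,j}(m)$. *)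

(* Defs.v *)
From HB Require Import structures.
From mathcomp Require Import all_boot all_order all_algebra.
From mathcomp Require Import all_classical all_reals all_analysis.
Set Implicit Arguments. Unset Strict Implicit. Unset Printing Implicit Defensive.
Import Order.TTheory GRing.Theory Num.Theory.

Definition iterz (T : Type) (P Q : T -> T) (k : int) (x : T) : T :=
  match k with
  | Posz n => iter n P x
  | Negz n => iter n.+1 Q x
  end.

(* Main.v *)
Require Import Defs.
From HB Require Import structures.
From mathcomp Require Import all_boot all_order all_algebra.
From mathcomp Require Import all_classical all_reals all_analysis.
From mathcomp Require Import zify.
Import Order.TTheory GRing.Theory Num.Theory.
Local Open Scope classical_set_scope.
Local Open Scope ring_scope.

(* Regions are indexed by bool (false = R_0, true = R_1);
   L i n stands for the lobe L_{i, 1-i}(n). *)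
Theorem lemma3 (d : measure_display) (Sigma : measurableType d) (R : realType)
  (mu : {measure set Sigma -> \bar R})
  (P Q : Sigma -> Sigma)
  (PQ : cancel P Q) (QP : cancel Q P)
  (mP : measurable_fun setT P)
  (mu_pres : forall A, measurable A -> mu (P @^-1` A) = mu A)
  (Reg : bool -> set Sigma) (L : bool -> int -> set Sigma)
  (Reg_disj : Reg false `&` Reg true = set0)
  (Reg_cover : Reg false `|` Reg true = setT)
  (L1_sub : forall i, L i 1 `<=` Reg i)
  (L0_img : forall i, L i 0 = P @` L i 1)
  (L0_sub : forall i, L i 0 `<=` Reg (~~ i))
  (L_shift : forall i (k n : int), iterz P Q k @` L i n = L i (n - k))
  (turnstile : forall i (m : int) (x : Sigma),
      Reg i (iterz P Q (m - 1) x) -> Reg (~~ i) (iterz P Q m x) -> L i m x)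
  (hdisj : L false 0 `&` L true 0 = set0)
  (i : bool) (k1 k3 : int) (hk : k1 < k3)
  (hne : L i k1 `&` L i k3 !=set0) :
  L i k1 `&` L i k3 =
    \bigcup_(k2 in [set k : int | k1 < k < k3])
      (L i k1 `&` L (~~ i) k2 `&` L i k3).
Proof.
have disj : forall b y, Reg b y -> Reg (~~ b) y -> False.
  move=> b y h1 h2; have : (Reg false `&` Reg true) y by case: b h1 h2 => /= h1 h2.
  by rewrite Reg_disj.
have cov : forall b y, Reg b y \/ Reg (~~ b) y.
  move=> b y; have : (Reg false `|` Reg true) y by rewrite Reg_cover.
  by case: b => -[h|h]; [right|left|left|right].
have inL : forall b n k x, L b n x -> L b (n - k) (iterz P Q k x).
  by move=> b n k x h; rewrite -L_shift; exists x.
have ex : forall j : nat, forall x, Reg (~~ i) (iterz P Q k1 x) ->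
    Reg i (iterz P Q (k1 + j%:Z) x) ->
    exists m, k1 < m <= k1 + j%:Z /\ L (~~ i) m x.
  elim=> [|j IH] x h0 hj.
    by exfalso; apply: (disj i (iterz P Q k1 x)) => //; rewrite -(addr0 k1).
  have [hr|hr] := cov i (iterz P Q (k1 + j%:Z) x).
    have [m [/andP [a b] c]] := IH x h0 hr.
    exists m; split => //; apply/andP; split => //.
    by apply: (le_trans b); rewrite lerD2l lez_nat.
  exists (k1 + j.+1%:Z); split.
    by apply/andP; split => //; rewrite ltrDl ltz_nat.
  apply: turnstile; rewrite ?negbK //.
  by have -> : k1 + j.+1%:Z - 1 = k1 + j%:Z by rewrite -addrA; congr (_ + _); rewrite -addn1 PoszD addrK.
apply/seteqP; split; last first.
  by move=> x [k2 _ [[a _] c]].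
move=> x [h1 h3].
have r1 : Reg (~~ i) (iterz P Q k1 x).
  by apply: L0_sub; have := inL _ _ k1 _ h1; rewrite subrr.
have r3 : Reg i (iterz P Q (k3 - 1) x).
  apply: L1_sub; have := inL _ _ (k3 - 1) _ h3.
  by have -> : k3 - (k3 - 1) = 1 by rewrite opprB addrC subrK.
have [j hj] : exists j : nat, k3 - 1 = k1 + j%:Z.
  exists (absz (k3 - 1 - k1)%R); lia.
rewrite hj in r3.
have [m [/andP [a b] c]] := ex j x r1 r3.
exists m; last by split.
rewrite /= a /=; apply: (le_lt_trans b); rewrite -hj.
lia.
Qed.
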